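(* Let $m\ge3$ be odd, $Q_{4m}=\langle a,b\mid a^m=1=b^4,\ b^{-1}ab=a^{-1}\rangle$, $s$ an odd prime with $\gcd(s,m)=1$, $q$ a power of $s$, and $\zeta$ a primitive $m$-th root of unity in $\overline{\mathbb{F}}_s$. Suppose $\theta:=\zeta+\zeta^{-1}\in\mathbb{F}_q$ and $\zeta\notin\mathbb{F}_q$. Let $\alpha,\beta\in\mathbb{F}_q$ satisfy $\alpha^2+\beta^2=\theta^2-4$, put $A=\begin{pmatrix}\alpha&\beta\\\beta&-\alpha\end{pmatrix}$, $\tilde A=\frac{\theta}{2}I+\frac12A$ and $B=\begin{pmatrix}0&-1\\1&0\end{pmatrix}$. Then $\beta\ne0$, the assignment $\mu(a)=\tilde A$, $\mu(b)=B$ defines a faithful irreducible representation $\mu:Q_{4m}\to GL_2(\mathbb{F}_q)$, and $\mu$ is equivalent over $\overline{\mathbb{F}}_s$ to the representation $\tau$ given by $\tau(a)=\begin{pmatrix}\zeta&0\\0&\zeta^{-1}\end{pmatrix}$, $\tau(b)=\begin{pmatrix}0&-1\\1&0\end{pmatrix}$.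
   Context: $\overline{\mathbb{F}}_s$ is an algebraic closure of $\mathbb{F}_s$, and $\mathbb{F}_q$ is its subfield with $q$ elements. *)

(* Defs.v *)
From HB Require Import structures.
From mathcomp Require Import all_boot all_order all_algebra all_fingroup all_field mxrepresentation.
Set Implicit Arguments. Unset Strict Implicit. Unset Printing Implicit Defensive.
Import GRing.Theory.
Local Open Scope ring_scope.

Definition mx2 (R : Type) (x y z w : R) : 'M[R]_2 :=
  \matrix_(i < 2, j < 2)
     if i == 0 :> nat then (if j == 0 :> nat then x else y)
     else (if j == 0 :> nat then z else w).

(* Main.v *)
Require Import Defs.
From HB Require Import structures.
From mathcomp Require Import all_boot all_order all_algebra all_fingroup all_field mxrepresentation.
Import GRing.Theory.
Local Open Scope ring_scope.

Set Implicit Arguments. Unset Strict Implicit. Unset Printing Implicit Defensive.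

Lemma mx2P (R : Type) (M N : 'M[R]_2) :
  M ord0 ord0 = N ord0 ord0 -> M ord0 ord_max = N ord0 ord_max ->
  M ord_max ord0 = N ord_max ord0 -> M ord_max ord_max = N ord_max ord_max -> M = N.
Proof.
move=> h00 h01 h10 h11; apply/matrixP=> i j.
have [-> | ->] : i = ord0 \/ i = ord_max.
  by case: i => [[|[|i]] Hi] //; [left|right]; apply: val_inj.
all: have [-> | ->] : j = ord0 \/ j = ord_max by case: j => [[|[|j]] Hj] //; [left|right]; apply: val_inj.
all: by [].
Qed.

Lemma mx2_00 (R : Type) (x y z w : R) : mx2 x y z w ord0 ord0 = x.
Proof. by rewrite mxE. Qed.
Lemma mx2_01 (R : Type) (x y z w : R) : mx2 x y z w ord0 ord_max = y.
Proof. by rewrite mxE. Qed.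
Lemma mx2_10 (R : Type) (x y z w : R) : mx2 x y z w ord_max ord0 = z.
Proof. by rewrite mxE. Qed.
Lemma mx2_11 (R : Type) (x y z w : R) : mx2 x y z w ord_max ord_max = w.
Proof. by rewrite mxE. Qed.
Definition mx2E := (mx2_00, mx2_01, mx2_10, mx2_11).

Lemma mx2_mul (R : pzRingType) (x y z w x' y' z' w' : R) :
  mx2 x y z w *m mx2 x' y' z' w' =
  mx2 (x * x' + y * z') (x * y' + y * w') (z * x' + w * z') (z * y' + w * w').
Proof.
by apply: mx2P; rewrite !mxE !big_ord_recl big_ord0 !mxE /= addr0.
Qed.

Lemma mx2_add (R : pzRingType) (x y z w x' y' z' w' : R) :
  mx2 x y z w + mx2 x' y' z' w' = mx2 (x + x') (y + y') (z + z') (w + w').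
Proof. by apply: mx2P; rewrite !mxE. Qed.

Lemma mx2_scale (R : pzRingType) (k x y z w : R) :
  k *: mx2 x y z w = mx2 (k * x) (k * y) (k * z) (k * w).
Proof. by apply: mx2P; rewrite !mxE. Qed.

Lemma mx2_scalar (R : pzRingType) (k : R) : k%:M = mx2 k 0 0 k.
Proof. by apply: mx2P; rewrite !mxE. Qed.

Lemma mx2_1 (R : pzRingType) : (1 : 'M[R]_2) = mx2 1 0 0 1.
Proof. by rewrite -mx2_scalar. Qed.

Lemma mx2_map (aR rR : pzRingType) (f : {rmorphism aR -> rR}) (x y z w : aR) :
  map_mx f (mx2 x y z w) = mx2 (f x) (f y) (f z) (f w).
Proof. by apply: mx2P; rewrite !mxE. Qed.

Lemma mx2_det (R : comPzRingType) (x y z w : R) : \det (mx2 x y z w) = x * w - y * z.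
Proof.
rewrite (expand_det_row _ ord0) !big_ord_recl big_ord0 addr0 /cofactor.
rewrite !mxE /= !det_mx11 !mxE /= expr0 expr1 mul1r.
by rewrite mulN1r mulrN.
Qed.

Lemma detP_id (R : comPzRingType) (a c d : R) : a ^+ 2 + c ^+ 2 = d ^+ 2 ->
  c * c - (a - d) * (d - a) = d * (d - a) *+ 2.
Proof.
move=> h; have -> : a - d = - (d - a) by rewrite opprB.
rewrite mulNr opprK -!expr2 sqrrB.
have -> : c ^+ 2 + (d ^+ 2 - d * a *+ 2 + a ^+ 2) = (a ^+ 2 + c ^+ 2) + d ^+ 2 - d * a *+ 2.
  by rewrite addrC -addrA addrC addrA.
by rewrite h mulrBr mulrnBl -expr2 [d ^+ 2 *+ 2]mulr2n.
Qed.

Lemma ent00 (R : comPzRingType) (a c d : R) : a * c + c * (d - a) = c * d.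
Proof. by rewrite mulrBr [a * c]mulrC addrC subrK. Qed.

Lemma ent01 (R : comPzRingType) (a c d : R) : a ^+ 2 + c ^+ 2 = d ^+ 2 ->
  a * (a - d) + c * c = (a - d) * - d.
Proof.
move=> h; rewrite mulrBr addrAC -!expr2 h mulrN mulrBl opprB.
by rewrite expr2.
Qed.

Lemma ent10 (R : comPzRingType) (a c d : R) : a ^+ 2 + c ^+ 2 = d ^+ 2 ->
  c * c + - a * (d - a) = (d - a) * d.
Proof.
move=> h; rewrite mulNr mulrBr opprB addrCA -expr2.
by rewrite -expr2 addrA h mulrBl -expr2.
Qed.

Lemma ent11 (R : comPzRingType) (a c d : R) : c * (a - d) + - a * c = c * - d.
Proof. by rewrite mulrBr mulNr [a * c]mulrC addrAC subrr add0r mulrN. Qed.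

Lemma mx2_diagX (R : comPzRingType) (x y : R) n :
  (mx2 x 0 0 y : 'M[R]_2) ^+ n = mx2 (x ^+ n) 0 0 (y ^+ n).
Proof.
elim: n => [|n IH]; first by rewrite !expr0 mx2_1.
by rewrite exprS IH -mulmxE mx2_mul !mul0r !mulr0 !addr0 !add0r -!exprS.
Qed.

Lemma conjX (R : comUnitRingType) (P X : 'M[R]_2) n : P \in unitmx ->
  (P *m X *m invmx P) ^+ n = P *m X ^+ n *m invmx P.
Proof.
move=> uP; elim: n => [|n IH]; first by rewrite !expr0 mulmx1 mulmxV.
rewrite exprS IH -mulmxE !mulmxA mulmxKV //.
by rewrite exprS -mulmxE !mulmxA.
Qed.

Lemma map_mx2X (aR rR : comPzRingType) (f : {rmorphism aR -> rR}) (X : 'M[aR]_2) n :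
  map_mx f (X ^+ n) = (map_mx f X) ^+ n.
Proof.
elim: n => [|n IH]; first by rewrite !expr0 map_mx1.
by rewrite !exprS -!mulmxE map_mxM IH.
Qed.

Lemma half_sum (K : fieldType) (x y : K) : (2:K) != 0 ->
  (x + y) / 2 + 2^-1 * (x - y) = x.
Proof.
move=> h2; rewrite [_ * (x - y)]mulrC -mulrDl addrACA subrr addr0.
by rewrite -mulr2n -[x *+ 2]mulr_natr mulfK.
Qed.

Lemma half_dif (K : fieldType) (x y : K) : (2:K) != 0 ->
  (x + y) / 2 + 2^-1 * - (x - y) = y.
Proof.
move=> h2; rewrite [_ * - _]mulrC -mulrDl opprB [x + y]addrC addrACA subrr addr0.
by rewrite -mulr2n -[y *+ 2]mulr_natr mulfK.
Qed.

Lemma mx2_opp (R : pzRingType) (x y z w : R) :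
  - mx2 x y z w = mx2 (- x) (- y) (- z) (- w).
Proof. by apply: mx2P; rewrite !mxE. Qed.

Section GroupPart.
Local Open Scope group_scope.
Lemma pairX (gT rT : finGroupType) (a : gT) (x : rT) n : (a, x) ^+ n = (a ^+ n, x ^+ n).
Proof. by elim: n => [|n IH] //; rewrite !expgS IH. Qed.

Lemma ext_hom (gT rT : finGroupType) (G : {group gT}) (a b : gT) (x y : rT) (m : nat) :
  G \isog Grp (x : y : (x ^+ m, y ^+ 4, x ^ y = x^-1)) ->
  G = (<[a]> <*> <[b]>)%G ->
  a ^+ m = 1 -> b ^+ 4 = 1 -> a ^ b = a^-1 ->
  x ^+ m = 1 -> y ^+ 4 = 1 -> x ^ y = x^-1 ->
  exists phi : gT -> rT, [/\ phi 1 = 1, {in G &, {morph phi : u v / u * v}},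
     phi a = x & phi b = y].
Proof.
move=> isoG defG am b4 ab xm y4 xy.
set K := (<[(a, x)]> <*> <[(b, y)]>)%G.
have homK : K \homg Grp (x : y : (x ^+ m, y ^+ 4, x ^ y = x^-1)).
  apply/existsP; exists ((a, x), (b, y)) => /=.
  have -> : (a, x) ^ (b, y) = (a ^ b, x ^ y) by [].
  by rewrite !pairX am xm b4 y4 ab xy eqxx.
have KG : (#|K| <= #|G|)%N by apply: leq_homg; rewrite isoG.
pose f := restrm (subsetT K) (fst_morphism gT rT).
have fK : f @* K = G.
  rewrite morphim_restrm setIid /K morphimY ?cycle_subG ?inE //.
  by rewrite !morphim_cycle ?inE // defG.
have injf : 'injm f.
  apply/injmP; apply/imset_injP; rewrite -morphimEdom fK eqn_leq KG /=.
  by rewrite -{1}fK leq_morphim.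
exists (fun g => (invm injf g).2); split.
- by rewrite morph1.
- move=> u v Gu Gv /=; rewrite -fK in Gu Gv; by rewrite morphM.
- have Kax : (a, x) \in K by rewrite mem_gen // inE cycle_id.
  by have := invmE injf Kax => /= ->.
- have Kby : (b, y) \in K by rewrite mem_gen // inE cycle_id orbT.
  by have := invmE injf Kby => /= ->.
Qed.

End GroupPart.

Unset Implicit Arguments. Set Strict Implicit. Set Printing Implicit Defensive.

Theorem mainTheorem7
  (* the quaternion-type group Q_{4m} = < a, b | a^m = 1 = b^4, b^-1 a b = a^-1 > *)
  (m : nat) (Hm3 : (3 <= m)%N) (Hmodd : odd m)
  (gT : finGroupType) (G : {group gT}) (a b : gT)
  (HGpres : (G \isog Grp (x : y : (x ^+ m, y ^+ 4, x ^ y = x^-1)))%g)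
  (HGgen : G = (<[a]> <*> <[b]>)%G)
  (Ha : (a ^+ m = 1)%g) (Hb : (b ^+ 4 = 1)%g) (Hab : (a ^ b = a^-1)%g)
  (* s odd prime, coprime to m; F = F_q a finite field of characteristic s *)
  (s : nat) (Hs : prime s) (Hsodd : odd s) (Hsm : coprime s m)
  (F : finFieldType) (HcharF : s \in [pchar F])
  (* L = an algebraic closure of F_s (and of F), F embedded via f *)
  (L : closedFieldType) (f : {rmorphism F -> L})
  (HLalg : forall z : L, exists p : {poly F}, p != 0 /\ root (map_poly f p) z)
  (zeta : L) (Hzeta : m.-primitive_root zeta)
  (theta : F) (Htheta : f theta = zeta + zeta^-1)
  (HzetaF : forall x : F, f x != zeta)
  (alpha beta : F) (Hab2 : alpha ^+ 2 + beta ^+ 2 = theta ^+ 2 - 4) :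
  let A := mx2 alpha beta beta (- alpha) in
  let At := (theta / 2)%:M + 2^-1 *: A in
  let B := mx2 (0 : F) (-1) 1 0 in
  beta != 0 /\
  exists mu : mx_representation F G 2,
    [/\ mu a = At, mu b = B, mx_faithful mu, mx_irreducible mu &
        exists tau : mx_representation L G 2,
          [/\ tau a = mx2 zeta 0 0 zeta^-1, tau b = mx2 (0 : L) (-1) 1 0
            & mx_rsim (map_repr f mu) tau]].

Proof.
move=> A At B.
have m_gt0 : (0 < m)%N by apply: leq_trans Hm3.
have two_F : (2 : F) != 0.
  apply/negP => /eqP h2; have := dvdn_pcharf HcharF 2; rewrite h2 eqxx => hs.
  have /eqP s2 : s == 2%N by rewrite eqn_leq (dvdn_leq _ hs) ?(prime_gt1 Hs).
  by rewrite s2 in Hsodd.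
have two_L : (2 : L) != 0 by rewrite -(rmorph_nat f) fmorph_eq0.
have z_m : zeta ^+ m = 1 by apply: prim_expr_order.
have z_nz : zeta != 0.
  by apply/negP => /eqP z0; move: z_m; rewrite z0 expr0n gtn_eqF //= => /eqP; rewrite eq_sym oner_eq0.
set w := zeta^-1.
have zw : zeta * w = 1 by rewrite mulfV.
set d := zeta - w.
have d_nz : d != 0.
  rewrite subr_eq0; apply/negP => /eqP zw'.
  have : (m %| 2)%N by rewrite (prim_order_dvd Hzeta) expr2 {2}zw' zw.
  by move/(dvdn_leq (isT : (0 < 2)%N)); rewrite leqNgt (leq_trans _ Hm3).
have th2 : (zeta + w) ^+ 2 - 4 = d ^+ 2.
  have h4 : (zeta + w) ^+ 2 - d ^+ 2 = 4 by rewrite /d subr_sqrDB zw.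
  by rewrite -h4 opprB addrC subrK.
have half_z : forall y : F, f y = d -> f ((theta + y) / 2) = zeta.
  move=> y hy; rewrite fmorph_div rmorphD rmorph_nat Htheta hy /d.
  by rewrite addrACA -/w subrr addr0 -mulr2n -[zeta *+ 2]mulr_natr mulfK.
have key : forall x : F, x ^+ 2 != theta ^+ 2 - 4.
  move=> x; apply/negP => /eqP hx.
  have : (f x) ^+ 2 - d ^+ 2 = 0.
    by rewrite -rmorphXn hx rmorphB rmorphXn rmorph_nat Htheta th2 subrr.
  move/eqP; rewrite subr_sqr mulf_eq0 subr_eq0 addr_eq0 => /orP[] /eqP hfx.
    by move: (HzetaF ((theta + x) / 2)); rewrite half_z ?eqxx.
  move: (HzetaF ((theta + - x) / 2)); rewrite half_z ?eqxx //.
  by rewrite rmorphN hfx opprK.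
have beta_nz : beta != 0.
  apply/negP => /eqP b0; move: Hab2; rewrite b0 expr0n /= addr0 => /eqP.
  by rewrite (negbTE (key alpha)).
split => //.
have Hac : f alpha ^+ 2 + f beta ^+ 2 = d ^+ 2.
  by rewrite -th2 -Htheta -!rmorphXn -rmorphD Hab2 rmorphB rmorphXn rmorph_nat.
have a_ne_d : f alpha != d.
  apply/negP => /eqP had.
  have : alpha ^+ 2 = theta ^+ 2 - 4.
    by apply: (fmorph_inj f); rewrite rmorphXn had -th2 rmorphB rmorphXn Htheta rmorph_nat.
  by move/eqP; rewrite (negbTE (key alpha)).
pose P := mx2 (f beta) (f alpha - d) (d - f alpha) (f beta).
have uP : P \in unitmx.
  rewrite unitmxE mx2_det detP_id // unitfE -mulr_natr mulf_neq0 ?mulf_neq0 //.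
  by rewrite subr_eq0 eq_sym.
pose Dd := mx2 d 0 0 (- d).
pose A' := mx2 (f alpha) (f beta) (f beta) (- f alpha).
have AP : A' *m P = P *m Dd.
  by rewrite !mx2_mul ent00 ent01 // ent10 // ent11 ?mulr0 ?addr0 ?add0r.
pose D := mx2 zeta 0 0 w.
have AtfE : map_mx f At = (f theta / 2)%:M + 2^-1 *: A'.
  by rewrite /At map_mxD map_scalar_mx map_mxZ fmorph_div fmorphV rmorph_nat /A mx2_map rmorphN.
have APD : map_mx f At *m P = P *m D.
  rewrite AtfE mulmxDl mul_scalar_mx -scalemxAl AP scalemxAr -[(f theta / 2) *: P]mul_mx_scalar -mulmxDr.
  congr (P *m _); rewrite mx2_scalar mx2_scale mx2_add Htheta ?mulr0 ?addr0.
  by rewrite /Dd /d half_sum // half_dif.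
pose B' := mx2 (0 : L) (-1) 1 0.
have BPB : B' *m P = P *m B'.
  rewrite !mx2_mul ?mul0r ?mulr0 ?mul1r ?mulr1 ?add0r ?addr0 ?mulN1r ?mulrN1.
  by rewrite !opprB.
have BfE : map_mx f B = B' by rewrite /B mx2_map rmorph0 rmorphN rmorph1.
have AtfD : map_mx f At = P *m D *m invmx P by rewrite -APD mulmxK.
have BfD : B' = P *m B' *m invmx P by rewrite -BPB mulmxK.
have RAm : At ^+ m = 1.
  apply: (map_mx_inj (f:=f)); rewrite map_mx2X AtfD conjX // /D mx2_diagX z_m.
  by rewrite /w exprVn z_m invr1 -mx2_1 mulmx1 mulmxV // map_mx1.
have BB : B * B = -1.
  rewrite -mulmxE mx2_mul mx2_1 mx2_opp.
  by rewrite ?mul0r ?mulr0 ?mul1r ?mulr1 ?add0r ?addr0 ?mulN1r oppr0.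
have RB4 : B ^+ 4 = 1 by rewrite (_ : 4 = 2 * 2)%N // exprM [B ^+ 2]expr2 BB sqrrN expr1n.
have RAB : At * (B * At) = B.
  apply: (map_mx_inj (f:=f)); rewrite -!mulmxE !map_mxM BfE AtfD.
  rewrite [in LHS]BfD !mulmxA !(mulmxKV uP).
  have DBD : D *m (B' *m D) = B'.
    rewrite !mx2_mul ?mul0r ?mulr0 ?mul1r ?mulr1 ?add0r ?addr0 ?mulrN1 ?mulNr ?mulr0.
    by rewrite mul1r mulrN zw [w * zeta]mulrC zw.
  have -> : P *m D *m B' *m D = P *m B' by rewrite -!mulmxA DBD.
  by rewrite -BfD.
have uAt : At \is a GRing.unit.
  by apply/unitrP; exists (At ^+ m.-1); rewrite -exprS -exprSr prednK // RAm.
have uB : B \is a GRing.unit.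
  by apply/unitrP; exists (B ^+ 3); rewrite -exprS -exprSr RB4.
pose gA : {'GL_2[F]} := FinRing.unit _ uAt.
pose gB : {'GL_2[F]} := FinRing.unit _ uB.
have gAm : (gA ^+ m = 1)%g.
  by apply: val_inj; rewrite FinRing.val_unitX FinRing.val_unit1 /= RAm.
have gB4 : (gB ^+ 4 = 1)%g.
  by apply: val_inj; rewrite FinRing.val_unitX FinRing.val_unit1 /= RB4.
have gh : (gA * (gB * gA) = gB)%g.
  by apply: val_inj; rewrite !FinRing.val_unitM /= RAB.
have gAB : (gA ^ gB = gA^-1)%g.
  have e : (gA * gB = gB * gA^-1)%g.
    by apply: (canRL (mulgK gA)); rewrite -mulgA gh.
  by rewrite /conjg e mulKg.
have [phi [phi1 phiM phia phib]] := ext_hom HGpres HGgen Ha Hb Hab gAm gB4 gAB.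
have mu_repr : mx_repr G (fun g => (GLval (phi g) : 'M[F]_2)).
  split; first by rewrite phi1.
  by move=> u v Gu Gv; rewrite phiM // GL_MxE.
pose mu := MxRepresentation mu_repr.
have mua : mu a = At by rewrite /= phia.
have mub : mu b = B by rewrite /= phib.
exists mu.
pose Q := invmx P.
have uQ : Q \in unitmx by rewrite unitmx_inv.
pose tau := rconj_repr (map_repr f mu) uQ.
have taua : tau a = D.
  rewrite rconj_mxE map_reprE mua AtfD /Q invmxK !mulmxA (mulmxKV uP).
  by rewrite mulVmx // mul1mx.
have taub : tau b = B'.
  rewrite rconj_mxE map_reprE mub BfE /Q invmxK [in LHS]BfD !mulmxA (mulmxKV uP).
  by rewrite mulVmx // mul1mx.
have aG : a \in G by rewrite HGgen mem_gen // inE cycle_id.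
have bG : b \in G by rewrite HGgen mem_gen // inE cycle_id orbT.
have tau_faith : mx_faithful tau.
  have nab : (<[b]> \subset 'N(<[a]>))%g.
    by rewrite cycle_subG; apply/normP; rewrite -cycleJ Hab cycleV.
  apply/subsetP => g /rkerP [Gg tg1]; rewrite inE.
  have GE : (G : {set gT}) = (<[a]> * <[b]>)%g by rewrite HGgen /= norm_joinEr.
  have : g \in (<[a]> * <[b]>)%g by rewrite -GE.
  move=> /mulsgP [u v /cycleP [i ->] /cycleP [j ->] gE]; move: tg1; rewrite gE.
  rewrite -(expg_mod j Hb).
  have : (j %% 4 < 4)%N by rewrite ltn_pmod.
  move: (j %% 4)%N => r hr.
  rewrite repr_mxM ?groupX // !repr_mxX // taua taub mx2_diagX mx2_scalar.
  case: r hr => [|[|[|[|r]]]] // _.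
  - rewrite expr0 mx2_1 mx2_mul => /(congr1 (fun M : 'M[L]_2 => M ord0 ord0)); rewrite !mx2E.
    rewrite ?(mul0r, mulr0, mul1r, mulr1, addr0, add0r, mulN1r, mulrN1, oppr0).
    move/eqP; rewrite -(prim_order_dvd Hzeta) => /dvdnP [k ->].
    by rewrite expg0 mulg1 mulnC expgM Ha expg1n.
  - rewrite expr1 mx2_mul => /(congr1 (fun M : 'M[L]_2 => M ord0 ord0)); rewrite !mx2E.
    rewrite ?(mul0r, mulr0, mul1r, mulr1, addr0, add0r, mulN1r, mulrN1, oppr0).
    by move/eqP; rewrite eq_sym oner_eq0.
  - rewrite expr2 -mulmxE !mx2_mul => /(congr1 (fun M : 'M[L]_2 => M ord0 ord0)); rewrite !mx2E.
    rewrite ?(mul0r, mulr0, mul1r, mulr1, addr0, add0r, mulN1r, mulrN1, oppr0) => hz.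
    have hz' : zeta ^+ i = -1 by rewrite -hz opprK.
    have : (m %| i * 2)%N by rewrite (prim_order_dvd Hzeta) exprM hz' sqrrN expr1n.
    rewrite Gauss_dvdl ?coprimen2 // (prim_order_dvd Hzeta) hz' => /eqP e1.
    by move: two_L; rewrite mulr2n addr_eq0 e1 eqxx.
  - rewrite exprS expr2 -!mulmxE !mx2_mul => /(congr1 (fun M : 'M[L]_2 => M ord0 ord0)); rewrite !mx2E.
    rewrite ?(mul0r, mulr0, mul1r, mulr1, addr0, add0r, mulN1r, mulrN1, oppr0).
    by move/eqP; rewrite eq_sym oner_eq0.
split => //.
- by have := tau_faith; rewrite /tau conj_mx_faithful map_mx_faithful.
- apply/mx_irrP; split => // U modU nzU.
  apply: contraT => nfull.
  have rU : (\rank U <= 1)%N by rewrite -ltnS ltn_neqAle nfull rank_leq_col.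
  pose v := nz_row U.
  have vU : (v <= U)%MS := nz_row_sub U.
  have nzv : v != 0 by rewrite nz_row_eq0.
  have Uv : (U <= v)%MS.
    by rewrite -(mxrank_leqif_sup vU).2 eqn_leq mxrankS //= rank_rV nzv.
  have vAt : (v *m At <= v)%MS.
    apply: submx_trans Uv; apply: submx_trans (submxMr At vU) _.
    by rewrite -mua; apply: (mxmoduleP modU).
  have [c vc] := sub_rVP vAt.
  pose u := map_mx f v *m P.
  have uD : u *m D = f c *: u.
    by rewrite /u -mulmxA -APD mulmxA -map_mxM vc map_mxZ scalemxAl.
  have nzu : u != 0.
    apply: contra nzv => /eqP u0.
    have : map_mx f v = 0 by rewrite -(mulmxK uP (map_mx f v)) -/u u0 mul0mx.
    by move/eqP; rewrite map_mx_eq0.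
  clearbody u.
  have e0 : u ord0 ord0 * zeta = f c * u ord0 ord0.
    move/matrixP: uD => /(_ ord0 ord0); rewrite /D !mxE !big_ord_recl big_ord0 !mxE /=.
    by rewrite ?(mulr0, addr0).
  have e1 : u ord0 ord_max * w = f c * u ord0 ord_max.
    move/matrixP: uD => /(_ ord0 ord_max); rewrite /D !mxE !big_ord_recl big_ord0 !mxE /=.
    by rewrite (_ : lift ord0 ord0 = ord_max :> 'I_2) ?(mulr0, addr0, add0r) //; apply: val_inj.
  have [u00|u00] := eqVneq (u ord0 ord0) 0.
    have u01 : u ord0 ord_max != 0.
      apply: contra nzu => /eqP u01; apply/eqP/rowP => j.
      have [-> | ->] : j = ord0 \/ j = ord_max.
        by case: j => [[|[|j]] Hj] //; [left|right]; apply: val_inj.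
      - by rewrite u00 mxE.
      - by rewrite u01 mxE.
    have wc : w = f c by apply: (mulfI u01); rewrite e1 mulrC.
    by move: (HzetaF c^-1); rewrite fmorphV -wc /w invrK eqxx.
  have zc : zeta = f c by apply: (mulfI u00); rewrite e0 mulrC.
  by move: (HzetaF c); rewrite -zc eqxx.
- exists tau; split => //.
  apply: (MxReprSim (B := P)) => // [|x Gx]; first by rewrite row_free_unit.
  by rewrite rconj_mxE /Q invmxK !mulmxA mulmxV // mul1mx.
Qed.
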